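(* Let $\lambda$ be a dominant integral weight of $\mathfrak{sl}_{r+1}$, write $\lambda+\rho=(\ell_1>\ell_2>\cdots>\ell_r>\ell_{r+1}=0)$, and let $b\in\mathcal B(\lambda+\rho)$ with BZL path $\psi_{\mathbf i}(b)=(a_1,\dots,a_N)$. Let $1\le k\le N$ and suppose that $a_k=a_{j,j-i+1}$ in triangular indexing, where $1\le i\le j\le r$ (so that $i_k=i$ and $a_k=\mathbf a_{i,j}$). Put $b'=\tilde e_{i_{k-1}}^{a_{k-1}}\cdots\tilde e_{i_1}^{a_1}b$. Then $\ell_i-\mathbf b_{i,j}$ equals the number of $i$-boxes in the $i$th row of $b'$, and $\ell_{i+1}-\mathbf b_{i+1,j+1}$ equals the number of $(i+1)$-boxes in the $(i+1)$st row of $b'$.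
   Context: Fix $r\ge1$ and $\mathfrak g=\mathfrak{sl}_{r+1}$ with index set $I=\{1,\dots,r\}$, fundamental weights $\omega_1,\dots,\omega_r$, $N=r(r+1)/2$, and $\rho=\sum_i\omega_i$. For a dominant integral weight $\mu=\sum_i m_i\omega_i$, $\mathcal B(\mu)$ is identified (Kashiwara–Nakashima) with the set of semistandard Young tableaux with entries in $\{1,\dots,r+1\}$ of the shape having $m_i$ columns of height $i$; an entry equal to $k$ is a $k$-box. A tableau is identified with the tensor product of its entries read column by column from right to left, each column top to bottom, and $\tilde e_i,\tilde f_i$ act by the signature rule: for each factor write $-$ if it equals $i+1$, $+$ if it equals $i$; repeatedly cancel adjacent $+-$ pairs; $\tilde e_i$ changes the factor of the rightmost remaining $-$ from $i+1$ to $i$ (giving $0$ if none), $\tilde f_i$ changes the factor of the leftmost remaining $+$ from $i$ to $i+1$ (giving $0$ if none). For dominant $\lambda$, $\lambda+\rho$ is viewed as the partition with row lengths $\ell_1>\ell_2>\cdots>\ell_r>\ell_{r+1}=0$ (the shape of tableaux in $\mathcal B(\lambda+\rho)$). Fix the long word $\mathbf i=(i_1,\dots,i_N)=(1,2,1,3,2,1,\dots,r,\dots,2,1)$. The BZL path $\psi_{\mathbf i}(b)=(a_1,\dots,a_N)$: $a_k$ is maximal with $\tilde e_{i_k}^{a_k}\cdots\tilde e_{i_1}^{a_1}b\ne0$. Triangular form: $a_{i,j}=a_{i(i-1)/2+j}$ for $1\le j\le i\le r$; it corresponds to letter $i-j+1$. For $b\in\mathcal B(\lambda+\rho)$ and $1\le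 i\le j\le r$: $\mathbf a_{i,j}$ is the number of $(j+1)$-boxes in rows $1$ through $i$ of $b$; $\mathbf b_{i,j}$ is the number of boxes in the $i$th row of $b$ with entry $\ge j+1$. By convention $\mathbf b_{i,j}=0$ if $i=r+1$ or $j=r+1$. *)

(* Defs.v *)
From mathcomp Require Import all_boot.
Set Implicit Arguments. Unset Strict Implicit. Unset Printing Implicit Defensive.

(* A tableau is the list of its rows (top row first); entries are 1..r+1. *)
Definition tableau := seq (seq nat).

(* 1-indexed row access: row T p is the p-th row (empty if absent). *)
Definition row (T : tableau) (p : nat) : seq nat := nth [::] T p.-1.

(* lambda = sum_p m_p omega_p is encoded by m = [:: m_1; ...; m_r].
   lambda + rho = sum_p (m_p + 1) omega_p; its p-th row length is
   ell_p = sum_{q = p}^{r} (m_q + 1)   (so ell_{r+1} = 0). *)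
Definition ell (m : seq nat) (p : nat) : nat :=
  \sum_(p <= q < (size m).+1) (nth 0 m q.-1).+1.

(* Semistandard Young tableau with entries in {1..r+1} and row lengths
   sh 1, ..., sh r (T is an element of B(mu) when sh is the row-length
   function of mu). *)
Definition is_SSYT (r : nat) (sh : nat -> nat) (T : tableau) : Prop :=
  [/\ size T = r,
      forall p, 1 <= p <= r -> size (row T p) = sh p,
      forall p, 1 <= p <= r -> all (fun x => 1 <= x <= r.+1) (row T p),
      forall p, 1 <= p <= r -> sorted leq (row T p)
    & forall p c, 1 <= p < r -> c < size (row T p.+1) ->
        nth 0 (row T p) c < nth 0 (row T p.+1) c].

(* Cells (0-indexed (row, column)) in reading order: columns from right to
   left, each column from top to bottom. *)
Definition ncols (T : tableau) : nat := foldr maxn 0 (map size T).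

Definition cells (T : tableau) : seq (nat * nat) :=
  flatten [seq [seq (k, c) | k <- iota 0 (size T) & c < size (nth [::] T k)]
          | c <- rev (iota 0 (ncols T))].

Definition entry (T : tableau) (kc : nat * nat) : nat :=
  nth 0 (nth [::] T kc.1) kc.2.

Definition word (T : tableau) : seq nat := map (entry T) (cells T).

(* A signature is a list of (position, sign), with
   sign = true for '+' and false for '-'.  cancel1 removes the first
   adjacent '+-' pair; iterating it (size s) times cancels all such pairs
   repeatedly. *)
Fixpoint cancel1 (s : seq (nat * bool)) : seq (nat * bool) :=
  match s with
  | x :: ((y :: s'') as s') => if x.2 && ~~ y.2 then s'' else x :: cancel1 s'
  | _ => s
  end.

Definition reduced (s : seq (nat * bool)) := iter (size s) cancel1 s.

Definition signature (i : nat) (w : seq nat) : seq (nat * bool) :=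
  [seq (q, nth 0 w q == i) | q <- iota 0 (size w)
     & (nth 0 w q == i) || (nth 0 w q == i.+1)].

(* Kashiwara operator e~_i on a tableau; None stands for 0. *)
Definition e_op (i : nat) (T : tableau) : option tableau :=
  let w := word T in
  let minus := [seq q.1 | q <- reduced (signature i w) & ~~ q.2] in
  if minus is [::] then None else
  let kc := nth (0, 0) (cells T) (last 0 minus) in
  Some (set_nth [::] T kc.1 (set_nth 0 (nth [::] T kc.1) kc.2 i)).

Definition e_pow (i n : nat) (T : tableau) : option tableau :=
  iter n (fun o => obind (e_op i) o) (Some T).

(* e~_{w_n}^{a_n} ... e~_{w_1}^{a_1} T  (applied e_{w_1}^{a_1} first). *)
Fixpoint apply_e (ws as_ : seq nat) (T : tableau) : option tableau :=
  match ws, as_ with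
  | i :: ws', a :: as' => obind (apply_e ws' as') (e_pow i a T)
  | _, _ => Some T
  end.

Definition long_word (r : nat) : seq nat :=
  flatten [seq rev (iota 1 p) | p <- iota 1 r].

Definition Nlen (r : nat) : nat := r * r.+1 %/ 2.

(* a = (a_1, ..., a_N) is the BZL path psi_i(T): for each k (here 0-indexed),
   a_k is maximal such that e~_{i_k}^{a_k} ... e~_{i_1}^{a_1} T <> 0. *)
Definition is_BZL_path (r : nat) (T : tableau) (a : seq nat) : Prop :=
  size a = Nlen r /\
  forall k, k < Nlen r ->
    let pre := apply_e (take k (long_word r)) (take k a) T in
    let i := nth 0 (long_word r) k in
    obind (e_pow i (nth 0 a k)) pre <> None /\
    (forall n, obind (e_pow i n) pre <> None -> n <= nth 0 a k).

(* bold b_{p,q}: number of boxes in row p with entry >= q+1;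
   zero by convention when p = r+1 or q = r+1. *)
Definition bb (r : nat) (T : tableau) (p q : nat) : nat :=
  if (p == r.+1) || (q == r.+1) then 0
  else count (fun x => q.+1 <= x) (row T p).

(* Main.v *)
Require Import Defs.
From mathcomp Require Import all_boot zify.
Set Implicit Arguments. Unset Strict Implicit. Unset Printing Implicit Defensive.

Definition pat (x y z : nat) : seq bool :=
  nseq x false ++ nseq y true ++ flatten (nseq z [:: true; false]).

Lemma cancel1_minus (p : nat * bool) s : p.2 = false -> cancel1 (p :: s) = p :: cancel1 s.
Proof. by case: s => [|q s] //= ->. Qed.

Lemma cancel1_pp (p q : nat * bool) s : p.2 = true -> q.2 = true ->
  cancel1 (p :: q :: s) = p :: cancel1 (q :: s).
Proof. by move=> /= -> ->. Qed.

Lemma cancel_fix_true y (s : seq (nat * bool)) :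
  map snd s = nseq y true -> cancel1 s = s.
Proof.
elim: s y => [|p s IH] [|y] // [Hp Hs].
case: s IH Hs => [|q s] // IH Hs. case: y Hs => [|y] // [Hq Hs].
rewrite cancel1_pp //. by rewrite (IH y.+1) //= Hq Hs.
Qed.

Lemma cancel_fix x y (s : seq (nat * bool)) :
  map snd s = nseq x false ++ nseq y true -> cancel1 s = s.
Proof.
elim: x s => [|x IH] s; first exact: cancel_fix_true.
case: s => [|p s] // [Hp Hs]. by rewrite cancel1_minus // (IH s Hs).
Qed.

Lemma cancel_pat_y y z (s : seq (nat * bool)) :
  map snd s = nseq y true ++ flatten (nseq z.+1 [:: true; false]) ->
  cancel1 s = take y s ++ drop (y + 2) s.
Proof.
elim: y s => [|y IHy] s.
- case: s => [|p [|q s]] //= [Hp [Hq _]]. by rewrite Hp Hq drop0.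
- case: s => [|p s] // [Hp Hs]. case: s Hs => [|q s] // Hs.
  have Hq : q.2 = true by case: y {IHy} Hs => [|y] [].
  rewrite cancel1_pp // (IHy (q :: s)) //.
Qed.

Lemma cancel_pat x y z (s : seq (nat * bool)) :
  map snd s = pat x y z.+1 -> cancel1 s = take (x + y) s ++ drop (x + y + 2) s.
Proof.
rewrite /pat.
elim: x s => [|x IH] s; first exact: cancel_pat_y.
case: s => [|p s] // [Hp Hs]. by rewrite cancel1_minus // (IH s Hs).
Qed.

Lemma size_pat x y z : size (pat x y z) = x + y + 2 * z.
Proof.
rewrite /pat !size_cat !size_nseq addnA. congr (_ + _).
elim: z => [|z IH] //=. rewrite IH; lia.
Qed.

Lemma iter_pat n x y z (s : seq (nat * bool)) :
  map snd s = pat x y z -> z <= n -> iter n cancel1 s = take (x + y) s.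
Proof.
elim: n z s => [|n IH] z s Hs Hz.
- move: Hz; rewrite leqn0 => /eqP Hz; subst z.
  have /(congr1 size) := Hs. rewrite size_map size_pat => Hsz.
  by rewrite take_oversize //=; lia.
- rewrite iterSr. case: z Hs Hz => [|z] Hs Hz.
  + rewrite (@cancel_fix x y s); first exact: (IH 0).
    by rewrite Hs /pat /= cats0.
  + rewrite (cancel_pat Hs). rewrite (IH z) //.
    * have /(congr1 size) := Hs. rewrite size_map size_pat => Hsz.
      have Hst : size (take (x + y) s) = x + y by rewrite size_take; case: ifP => //; lia.
      by rewrite take_cat Hst ltnn subnn take0 cats0.
    * rewrite map_cat map_take map_drop Hs /pat.
      rewrite catA take_size_cat ?size_cat ?size_nseq //.
      rewrite drop_cat size_cat !size_nseq ltnNge leq_addr /=.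
      have -> : x + y + 2 - (x + y) = 2 by lia.
      by rewrite /= drop0 catA.
Qed.

Lemma reduced_pat x y z (s : seq (nat * bool)) :
  map snd s = pat x y z -> reduced s = take (x + y) s.
Proof.
move=> Hs. rewrite /reduced. apply: (iter_pat Hs).
have /(congr1 size) := Hs. rewrite size_map size_pat. lia.
Qed.

Definition upd (T : tableau) (kc : nat * nat) (v : nat) : tableau :=
  set_nth [::] T kc.1 (set_nth 0 (nth [::] T kc.1) kc.2 v).

Definition sgd (i : nat) (T : tableau) : seq (nat * nat) :=
  [seq c <- cells T | (entry T c == i) || (entry T c == i.+1)].

Lemma map_snd_const (s : seq (nat * bool)) n bb :
  map snd s = nseq n bb -> forall p, p \in s -> p.2 = bb.
Proof.
move=> Hs p Hp. have : p.2 \in map snd s by apply: map_f.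
by rewrite Hs => /nseqP [].
Qed.

Lemma e_op_pat i T x y z :
  map (fun c => entry T c == i) (sgd i T) = pat x y z ->
  e_op i T = if x is 0 then None else Some (upd T (nth (0,0) (sgd i T) x.-1) i).
Proof.
move=> Hpat.
set cs := cells T. set n := size cs.
set pr := fun q => (nth 0 (word T) q == i) || (nth 0 (word T) q == i.+1).
set I := [seq q <- iota 0 n | pr q].
have Hw : size (word T) = n by rewrite size_map.
have HwE : forall q, q < n -> nth 0 (word T) q = entry T (nth (0,0) cs q).
  by move=> q Hq; rewrite (nth_map (0,0)).
have HS : sgd i T = map (nth (0,0) cs) I.
  have Hcs : cs = map (nth (0,0) cs) (iota 0 n) by rewrite /n -/(mkseq _ _) mkseq_nth.
  rewrite /sgd -/cs {1}Hcs filter_map /I.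
  apply: congr1; apply: eq_in_filter => q; rewrite mem_iota /= => Hq.
  by rewrite /pr HwE.
have Hsig : signature i (word T) = [seq (q, nth 0 (word T) q == i) | q <- I].
  by rewrite /signature Hw.
have Hsnd : map snd (signature i (word T)) = pat x y z.
  rewrite Hsig -map_comp -Hpat HS -map_comp. apply/eq_in_map => q.
  rewrite mem_filter mem_iota /= => /andP [_ Hq]. by rewrite HwE.
have Hsz : size (signature i (word T)) = x + y + 2 * z.
  by rewrite -(size_map snd) Hsnd size_pat.
have Hmin : [seq q.1 | q <- reduced (signature i (word T)) & ~~ q.2]
            = map fst (take x (signature i (word T))).
  rewrite (reduced_pat Hsnd) takeD filter_cat.
  have H1 : map snd (take x (signature i (word T))) = nseq x false.
    by rewrite map_take Hsnd /pat take_size_cat ?size_nseq.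
  have H2 : map snd (take y (drop x (signature i (word T)))) = nseq y true.
    by rewrite map_take map_drop Hsnd /pat drop_size_cat ?size_nseq // take_size_cat ?size_nseq.
  rewrite (eq_in_filter (a2 := predT)); last by move=> p /(map_snd_const H1) ->.
  rewrite filter_predT (eq_in_filter (a2 := pred0)); last by move=> p /(map_snd_const H2) ->.
  by rewrite filter_pred0 cats0.
rewrite /e_op. rewrite Hmin -/cs.
case: x Hpat Hsnd Hsz Hmin => [|x] Hpat Hsnd Hsz Hmin; first by rewrite take0.
have Hsx : size (take x.+1 (signature i (word T))) = x.+1.
  by rewrite size_take; case: ifP => //; lia.
case Em : (map fst (take x.+1 (signature i (word T)))) => [|q0 qs].
  by move: (congr1 size Em); rewrite size_map Hsx.
have HI : x < size I.
  by move: Hsz; rewrite Hsig size_map; lia.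
have Hq : nth 0 (map fst (take x.+1 (signature i (word T)))) x = nth 0 I x.
  by rewrite (nth_map (0,false)) ?Hsx // nth_take // Hsig (nth_map 0).
by rewrite -Em -nth_last size_map Hsx /= Hq /upd HS (nth_map 0).
Qed.

Definition ent (T : tableau) k c := nth 0 (nth [::] T k) c.

Lemma count_sorted_le (s : seq nat) c v : sorted leq s -> c < size s ->
  (nth 0 s c <= v) = (c < count (fun x => x <= v) s).
Proof.
move=> Hs Hc.
have -> : count (fun x => x <= v) s = count (fun x => x <= v) (take c.+1 s) + count (fun x => x <= v) (drop c.+1 s)
  by rewrite -{1}(cat_take_drop c.+1 s) count_cat.
have Hst : size (take c.+1 s) = c.+1 by rewrite size_take; case: ifP => //; lia.
case: (leqP (nth 0 s c) v) => Hv.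
- have : all (fun x => x <= v) (take c.+1 s).
    apply/allP => u /(nthP 0) [q Hq <-]. rewrite Hst in Hq.
    rewrite nth_take //. apply: leq_trans Hv.
    apply: (sorted_leq_nth leq_trans leqnn 0 Hs); rewrite ?inE /=; lia.
  rewrite all_count => /eqP ->. rewrite Hst. symmetry. lia.
- have H1 : count (fun x => x <= v) (drop c.+1 s) = 0.
    apply/eqP; rewrite -leqn0 leqNgt -has_count; apply/negP => /hasP [u /(nthP 0) [q Hq <-]].
    rewrite size_drop in Hq. rewrite nth_drop /= => Hle.
    have Hq2 : q < size s - c.+1 := Hq.
    have Hmono : nth 0 s c <= nth 0 s (c.+1 + q).
      by apply: (sorted_leq_nth leq_trans leqnn 0 Hs); rewrite ?inE /=; lia.
    have := leq_trans Hmono Hle; by rewrite leqNgt Hv.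
  rewrite H1 addn0.
  have Ht : count (fun x => x <= v) (take c.+1 s) <= c.
    have Hf : (nth 0 s c <= v) = false by rewrite leqNgt Hv.
    rewrite (take_nth 0) // -cats1 count_cat /= Hf addn0.
    rewrite -[X in _ + X]/0 addn0.
    apply: (leq_trans (count_size _ _)). by rewrite size_take Hc.
  apply: esym; apply: negbTE; rewrite -leqNgt. exact Ht.
Qed.

Section Main.
Variables (r : nat) (m : seq nat) (b : tableau).
Hypothesis Hr : 1 <= r.
Hypothesis Hb : is_SSYT r (ell m) b.

Lemma L_size : size b = r.
Proof. by case: Hb. Qed.

Lemma L_rowsz k : k < r -> size (nth [::] b k) = ell m k.+1.
Proof. case: Hb => _ H _ _ _ Hk. exact: (H k.+1). Qed.

Lemma L_range k c : k < r -> c < size (nth [::] b k) -> 1 <= ent b k c <= r.+1.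
Proof.
case: Hb => _ _ H _ _ Hk Hc. have := H k.+1 Hk => /allP; apply.
exact: mem_nth.
Qed.

Lemma L_sorted k : k < r -> sorted leq (nth [::] b k).
Proof. case: Hb => _ _ _ H _ Hk. exact: (H k.+1). Qed.

Lemma L_strict k c : k.+1 < r -> c < size (nth [::] b k.+1) -> ent b k c < ent b k.+1 c.
Proof. case: Hb => _ _ _ _ H Hk Hc. exact: (H k.+1 c). Qed.

Lemma ell_step p : p <= (size m) -> ell m p.+1 <= ell m p.
Proof.
move=> Hp. rewrite /ell. case: p Hp => [|p] Hp.
- rewrite (@big_ltn _ _ _ 0) //. lia.
- rewrite (@big_ltn _ _ _ p.+1); lia.
Qed.

Hypothesis Hm : size m = r.

Lemma L_shape k : k.+1 < r -> size (nth [::] b k.+1) <= size (nth [::] b k).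
Proof.
move=> Hk. rewrite !L_rowsz //; last lia. apply: ell_step. lia.
Qed.

Lemma L_shape' k k' : k <= k' -> k' < r -> size (nth [::] b k') <= size (nth [::] b k).
Proof.
move=> Hkk'. rewrite -(subnK Hkk'). elim: (k' - k) => [|d IH] Hd //.
rewrite addSn. apply: leq_trans (L_shape _) (IH _); lia.
Qed.

Lemma L_col k k' c : k <= k' -> k' < r -> c < size (nth [::] b k') ->
  ent b k c + (k' - k) <= ent b k' c.
Proof.
move=> Hkk'. rewrite -(subnK Hkk'). elim: (k' - k) => [|d IH] Hd Hc.
  by rewrite add0n subnn addn0.
rewrite addSn in Hd Hc *.
have Hs : size (nth [::] b (d + k).+1) <= size (nth [::] b (d + k)) by apply: L_shape.
have Hc' : c < size (nth [::] b (d + k)) by apply: leq_trans Hc Hs.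
have := IH (ltnW Hd) Hc'. have := L_strict Hd Hc. lia.
Qed.

Lemma L_ge k c : k < r -> c < size (nth [::] b k) -> k.+1 <= ent b k c.
Proof.
move=> Hk Hc. have Hc0 : c < size (nth [::] b 0) by apply: leq_trans Hc (L_shape' _ _).
have := L_col (leq0n k) Hk Hc. have := L_range Hr Hc0. lia.
Qed.

End Main.

Definition colc (T : tableau) (col : nat) : seq (nat * nat) :=
  [seq (k, col) | k <- iota 0 (size T) & col < size (nth [::] T k)].

Lemma cellsE T : cells T = flatten [seq colc T col | col <- rev (iota 0 (ncols T))].
Proof. by []. Qed.

Lemma size_nth_map (T : tableau) k : size (nth [::] T k) = nth 0 (map size T) k.
Proof. by elim: T k => [|x T IH] [|k] //=. Qed.

Lemma cells_shape T T' : map size T = map size T' -> cells T = cells T'.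
Proof.
move=> H. rewrite !cellsE /ncols H.
have Hs : size T = size T' by rewrite -(size_map size T) H size_map.
congr flatten; apply: eq_map => col. rewrite /colc Hs.
congr map; apply: eq_filter => k. by rewrite !size_nth_map H.
Qed.

Lemma mem_colc T col kc : kc \in colc T col ->
  [/\ kc.2 = col, kc.1 < size T & col < size (nth [::] T kc.1)].
Proof.
case: kc => k c. rewrite /colc => /mapP [k' ]. rewrite mem_filter mem_iota => /andP [H1 H2] [-> ->].
by split.
Qed.

Lemma mem_flatten_colc T cols kc : kc \in flatten [seq colc T col | col <- cols] ->
  [/\ kc.2 \in cols, kc.1 < size T & kc.2 < size (nth [::] T kc.1)].
Proof.
move=> /flatten_mapP [col Hcol /mem_colc [H1 H2 H3]]. by subst col.
Qed.

Lemma size_le_ncols T k : size (nth [::] T k) <= ncols T.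
Proof.
rewrite /ncols. elim: T k => [|x T IH] [|k] //=; first exact: leq_maxl.
apply: leq_trans (IH k) _. exact: leq_maxr.
Qed.

Lemma mem_cells T kc : kc \in cells T -> kc.1 < size T /\ kc.2 < size (nth [::] T kc.1).
Proof. rewrite cellsE => /mem_flatten_colc [_ ? ?]. by split. Qed.

Lemma cells_mem T k c : k < size T -> c < size (nth [::] T k) -> (k, c) \in cells T.
Proof.
move=> Hk Hc. rewrite cellsE. apply/flatten_mapP. exists c.
  rewrite mem_rev mem_iota /= add0n. apply: leq_trans Hc (size_le_ncols _ _).
rewrite /colc. apply/mapP. exists k => //. by rewrite mem_filter mem_iota Hc /=.
Qed.

Lemma uniq_colcs T cols : uniq cols -> uniq (flatten [seq colc T col | col <- cols]).
Proof.
elim: cols => [|col cols IH] //= /andP [Hn Hu]. rewrite cat_uniq IH // andbT.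
apply/andP; split.
- rewrite /colc map_inj_uniq ?filter_uniq ?iota_uniq //. by move=> x y [].
- apply/hasP => [[kc /mem_flatten_colc [H1 _ _] /mem_colc [H2 _ _]]].
  by move: Hn; rewrite -H2 H1.
Qed.

Lemma cells_uniq T : uniq (cells T).
Proof. rewrite cellsE. apply: uniq_colcs. by rewrite rev_uniq iota_uniq. Qed.

Lemma cells_split T C : C <= ncols T ->
  cells T = flatten [seq colc T col | col <- rev (iota C (ncols T - C))]
            ++ flatten [seq colc T col | col <- rev (iota 0 C)].
Proof.
move=> HC. rewrite cellsE -(subnKC HC) iotaD rev_cat map_cat flatten_cat add0n.
by rewrite addKn.
Qed.

Definition fval (j t p x : nat) : nat :=
  if x <= j then p else if x == j.+1 then maxn p t.+1 else x.

Definition V (b : tableau) (j t : nat) : tableau :=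
  [seq map (fval j t k.+1) (nth [::] b k) | k <- iota 0 (size b)].

Lemma size_V b j t : size (V b j t) = size b.
Proof. by rewrite size_map size_iota. Qed.

Lemma nth_V b j t k : k < size b -> nth [::] (V b j t) k = map (fval j t k.+1) (nth [::] b k).
Proof. move=> Hk. by rewrite (nth_map 0) ?size_iota // nth_iota. Qed.

Lemma shape_V b j t : map size (V b j t) = map size b.
Proof.
apply: (@eq_from_nth _ 0); first by rewrite !size_map ?size_iota ?size_V.
move=> k; rewrite size_map size_V => Hk.
by rewrite !(nth_map [::]) ?size_V // nth_V // size_map.
Qed.

Lemma ent_V b j t k c : k < size b -> c < size (nth [::] b k) ->
  ent (V b j t) k c = fval j t k.+1 (ent b k c).
Proof. move=> Hk Hc. by rewrite /ent nth_V // (nth_map 0). Qed.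

Lemma size_nth_eq (T T' : tableau) k : map size T = map size T' ->
  size (nth [::] T k) = size (nth [::] T' k).
Proof. by move=> H; rewrite !size_nth_map H. Qed.

Lemma upd_shape T kc v : kc.1 < size T -> kc.2 < size (nth [::] T kc.1) ->
  map size (upd T kc v) = map size T.
Proof.
case: kc => k c /= Hk Hc.
have Hs : size (upd T (k, c) v) = size T.
  rewrite /upd size_set_nth /=. apply/maxn_idPr. exact: Hk.
apply: (@eq_from_nth _ 0); first by rewrite !size_map Hs.
move=> q; rewrite size_map Hs => Hq.
rewrite !(nth_map [::]) ?Hs // /upd /= nth_set_nth /=.
case: eqP => // ->. rewrite size_set_nth. apply/maxn_idPr. exact: Hc.
Qed.

Lemma upd_ent T kc v k c : kc.1 < size T ->
  ent (upd T kc v) k c = if (k, c) == kc then v else ent T k c.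
Proof.
case: kc => k0 c0 /= Hk. rewrite /ent /upd /= nth_set_nth /= xpair_eqE.
case: (k =P k0) => [->|] //=. by rewrite nth_set_nth /=; case: eqP.
Qed.

Lemma tableau_ext (T T' : tableau) : map size T = map size T' ->
  (forall k c, k < size T -> c < size (nth [::] T k) -> ent T k c = ent T' k c) -> T = T'.
Proof.
move=> Hs He. have Hsz : size T = size T' by rewrite -(size_map size T) Hs size_map.
apply: (@eq_from_nth _ [::]) => // k Hk.
have Hsk := size_nth_eq k Hs.
apply: (@eq_from_nth _ 0) => // c Hc. exact: He.
Qed.

Lemma map_const_in (A : eqType) (B : Type) (g : A -> B) v (s : seq A) :
  (forall x, x \in s -> g x = v) -> map g s = nseq (size s) v.
Proof.
elim: s => [|x s IH] //= H. rewrite H; last by rewrite inE eqxx.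
by rewrite IH // => y Hy; apply: H; rewrite inE Hy orbT.
Qed.

Lemma entryE (T : tableau) k c : entry T (k, c) = ent T k c.
Proof. by []. Qed.

Lemma filter_iota_nil (p : pred nat) s l :
  (forall k, s <= k < s + l -> p k = false) -> filter p (iota s l) = [::].
Proof.
move=> H. rewrite (eq_in_filter (a2 := pred0)) ?filter_pred0 //.
move=> k; rewrite mem_iota => Hk. exact: H.
Qed.

Lemma filter_iota2 a n (cnd : bool) : a < n -> (cnd -> a.+1 < n) ->
  filter (fun k => (k == a) || ((k == a.+1) && cnd)) (iota 0 n)
  = a :: (if cnd then [:: a.+1] else [::]).
Proof.
move=> Han Hc. rewrite -(subnKC (ltnW Han)) iotaD filter_cat filter_iota_nil; last by move=> k; lia.
rewrite add0n /=. have -> : n - a = (n - a).-1.+1 by lia.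
rewrite /= eqxx /=. case: cnd Hc => Hc.
- have -> : (n - a).-1 = ((n - a).-1).-1.+1 by have := Hc isT; lia.
  rewrite /= eqxx orbT filter_iota_nil //. move=> k; lia.
- rewrite filter_iota_nil //. move=> k; lia.
Qed.

Lemma lo_pat_A C C1 : C <= C1 ->
  flatten [seq true :: (if col < C1 then [:: false] else [::]) | col <- rev (iota 0 C)]
  = flatten (nseq C [:: true; false]).
Proof.
elim: C => [|C IH] HC //.
rewrite -addn1 iotaD rev_cat /= add0n ifT; last lia.
rewrite IH; last lia. by rewrite addn1.
Qed.

Lemma lo_pat C C1 : C1 <= C ->
  flatten [seq true :: (if col < C1 then [:: false] else [::]) | col <- rev (iota 0 C)]
  = nseq (C - C1) true ++ flatten (nseq C1 [:: true; false]).
Proof.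
move=> HC. rewrite -(subnKC HC). elim: (C - C1) => [|d IH].
  by rewrite addn0 subnn lo_pat_A.
rewrite addnS -addn1 iotaD rev_cat /= add0n ifF; last lia.
have -> : C1 + d + 1 - C1 = (C1 + d - C1).+1 by lia.
by rewrite IH.
Qed.

Section Step.
Variables (r : nat) (m : seq nat) (b : tableau).
Hypothesis Hr : 1 <= r.
Hypothesis Hb : is_SSYT r (ell m) b.
Hypothesis Hm : size m = r.
Variables (j t : nat).
Hypothesis Ht : 1 <= t.
Hypothesis Htj : t <= j.
Hypothesis Hjr : j <= r.

Let Hsb : size b = r := L_size Hb.
Let shp := L_shape Hr Hb Hm.
Let strict := L_strict Hb.
Let colm := L_col Hr Hb Hm.
Let geb := L_ge Hr Hb Hm.
Let rng := L_range Hb.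

Let C0 := count (fun x => x <= j) (nth [::] b t.-1).
Let C1 := count (fun x => x <= j.+1) (nth [::] b t).

Lemma K1 col : col < size (nth [::] b t.-1) -> (ent b t.-1 col <= j) = (col < C0).
Proof. move=> Hc. apply: count_sorted_le => //. apply: (L_sorted Hb). lia. Qed.

Lemma K2 col : t < r -> col < size (nth [::] b t) -> (ent b t col <= j.+1) = (col < C1).
Proof. move=> Htr Hc. apply: count_sorted_le => //. exact: (L_sorted Hb). Qed.

Lemma C0_size : C0 <= size (nth [::] b t.-1).
Proof. exact: count_size. Qed.

Lemma C1_size : C1 <= size (nth [::] b t).
Proof. exact: count_size. Qed.

Lemma C1_tr : 0 < C1 -> t < r.
Proof.
move=> H. case: (ltnP t r) => // Htr. move: H.
by rewrite /C1 nth_default // Hsb.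
Qed.

Lemma Kb col : t < r -> col < size (nth [::] b t) -> C0 <= col -> j.+1 < ent b t col.
Proof.
move=> Htr Hc HC.
have Hc' : col < size (nth [::] b t.-1).
  apply: leq_trans Hc _. have := @shp t.-1. rewrite prednK //. apply. done.
have := K1 Hc'. have := @strict t.-1 col. rewrite prednK // => H1 H2.
have := H1 Htr Hc. have : (col < C0) = false by lia. lia.
Qed.

Lemma C1_le_C0 : C1 <= C0.
Proof.
case E : C1 => [|c1] //. have Htr : t < r by apply: C1_tr; rewrite E.
have Hc : c1 < size (nth [::] b t) by move: C1_size; rewrite E.
have := K2 Htr Hc. rewrite E ltnSn => H.
case: (leqP C0 c1) => // HC. have := Kb Htr Hc HC. lia.
Qed.

Definition pP (c : nat * nat) : bool := (c.1 < t) && (ent b c.1 c.2 == j.+1).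
Let P := [seq c <- cells b | pP c].
Let D := size P.

Lemma P_valid c : c \in P -> c.1 < r /\ c.2 < size (nth [::] b c.1).
Proof. rewrite mem_filter => /andP [_ /mem_cells]. by rewrite Hsb. Qed.

Lemma P_col c : c \in P -> C0 <= c.2.
Proof.
case: c => k col Hc. have [/= H1 H2] := P_valid Hc.
move: Hc; rewrite mem_filter /pP /= => /andP [/andP [Hk /eqP Hx] _].
case: (leqP C0 col) => // Hlt.
have Hc' : col < size (nth [::] b t.-1) by apply: leq_trans Hlt C0_size.
have Ha : k <= t.-1 by lia.
have Hb' : t.-1 < r by lia.
have := @colm k t.-1 col Ha Hb' Hc'.
have := K1 Hc'. rewrite Hlt Hx. lia.
Qed.

Fixpoint Wst (n : nat) : tableau :=
  if n is n'.+1 then upd (Wst n') (nth (0,0) P (D - n)) t else V b j t.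

Lemma W_props n : n <= D -> map size (Wst n) = map size b /\
  forall k c, k < r -> c < size (nth [::] b k) ->
    ent (Wst n) k c = if (k, c) \in drop (D - n) P then t else fval j t k.+1 (ent b k c).
Proof.
elim: n => [|n IH] Hn /=.
- split; first exact: shape_V.
  move=> k c Hk Hc. by rewrite subn0 drop_size ent_V ?Hsb.
- have [IH1 IH2] := IH (ltnW Hn).
  have HnP : nth (0,0) P (D - n.+1) \in P by apply: mem_nth; rewrite -/D; lia.
  have [Hv1 Hv2] := P_valid HnP.
  have Hsz : size (Wst n) = size b by rewrite -(size_map size) IH1 size_map.
  have Hv1' : (nth (0,0) P (D - n.+1)).1 < size (Wst n) by rewrite Hsz Hsb.
  split.
  + rewrite upd_shape //. by rewrite (size_nth_eq _ IH1).
  + move=> k c Hk Hc. rewrite upd_ent // IH2 //.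
    rewrite [drop (D - n.+1) P](drop_nth (0,0)); last by rewrite -/D; lia.
    have -> : (D - n.+1).+1 = D - n by lia.
    by rewrite in_cons; case: eqP.
Qed.

Lemma hi_pred n k col : n <= D -> k < r -> col < size (nth [::] b k) -> C0 <= col ->
  (entry (Wst n) (k, col) == t) || (entry (Wst n) (k, col) == t.+1) = pP (k, col).
Proof.
move=> Hn Hk Hc HC. have [_ HW] := W_props Hn.
rewrite entryE HW //. case: ifP => Hin.
- move: (mem_drop Hin). rewrite mem_filter => /andP [-> _]. by rewrite eqxx.
- rewrite /pP /=. set x := ent b k col.
  have Ha : k = t.-1 -> j < x.
    move=> Ek. rewrite Ek in Hc. have := K1 Hc. rewrite /x Ek. lia.
  have Hbb : k = t -> j.+1 < x.
    move=> Ek. rewrite Ek in Hc Hk. rewrite /x Ek. exact: Kb.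
  rewrite /fval. case: ifP => H1; [|case: ifP => H2]; lia.
Qed.

Lemma lo_notP k col : k < r -> col < size (nth [::] b k) -> col < C0 -> pP (k, col) = false.
Proof.
move=> Hk Hc HC. apply/negbTE/negP => Hp.
have : (k, col) \in P by rewrite mem_filter Hp cells_mem ?Hsb.
move/P_col => /=. lia.
Qed.

Lemma lo_col n col : n <= D -> col < C0 ->
  filter (fun c => (entry (Wst n) c == t) || (entry (Wst n) c == t.+1)) (colc b col)
  = (t.-1, col) :: (if col < C1 then [:: (t, col)] else [::]).
Proof.
move=> Hn HC. have [_ HW] := W_props Hn.
have HC0 := C0_size. have HC1 := C1_size.
rewrite /colc filter_map -filter_predI Hsb.
rewrite (eq_in_filter (a2 := fun k => (k == t.-1) || ((k == t) && (col < C1)))).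
- have -> : t = t.-1.+1 by lia.
  rewrite filter_iota2 /=; try lia.
  + by case: ifP.
  + move=> H. rewrite prednK //. apply: C1_tr. lia.
- move=> k; rewrite mem_iota /= => Hk.
  case: (ltnP col (size (nth [::] b k))) => Hc; last first.
  + rewrite andbF. case: (eqVneq k t.-1) => [Ek|Ek].
      subst k. lia.
    case: (eqVneq k t) => [Ek'|Ek'] /=; last by [].
    subst k. lia.
  + rewrite andbT /= entryE HW //.
    have Hnin : ((k, col) \in drop (D - n) P) = false.
      apply/negbTE/negP => /mem_drop. by rewrite mem_filter lo_notP.
    rewrite Hnin. set x := ent b k col.
    have Hge : k.+1 <= x by apply: geb.
    have Ha : k = t.-1 -> x <= j.
      move=> Ek. rewrite Ek in Hc. have := K1 Hc. rewrite /x Ek. lia.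
    have Hbb : k = t -> (x <= j.+1) = (col < C1).
      move=> Ek. rewrite Ek in Hc Hk. rewrite /x Ek. exact: K2.
    have Hcc : k < t.-1 -> x < j.
      move=> Hkt. have Hc' : col < size (nth [::] b t.-1) by lia.
      have := @colm k t.-1 col ltac:(lia) ltac:(lia) Hc'.
      have := K1 Hc'. rewrite HC /x. lia.
    rewrite /fval. case: ifP => H1; [|case: ifP => H2]; lia.
Qed.

Lemma C0_ncols : C0 <= ncols b.
Proof. apply: leq_trans C0_size _. exact: size_le_ncols. Qed.

Lemma sgd_W n : n <= D -> sgd t (Wst n) =
  P ++ flatten [seq (t.-1, col) :: (if col < C1 then [:: (t, col)] else [::]) | col <- rev (iota 0 C0)].
Proof.
move=> Hn. have [HW1 _] := W_props Hn.
rewrite /sgd (cells_shape HW1) (cells_split C0_ncols) filter_cat.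
have HP : P = filter pP (flatten [seq colc b col | col <- rev (iota C0 (ncols b - C0))]).
  rewrite /P (cells_split C0_ncols) filter_cat.
  rewrite [X in _ ++ X](eq_in_filter (a2 := pred0)) ?filter_pred0 ?cats0 //.
  case=> k col /mem_flatten_colc [/= H1 H2 H3]. move: H1 H2; rewrite mem_rev mem_iota Hsb /= => H1 H2.
  apply: lo_notP => //; lia.
congr (_ ++ _).
- rewrite HP. apply: eq_in_filter. case=> k col /mem_flatten_colc [/= H1 H2 H3].
  move: H1 H2; rewrite mem_rev mem_iota Hsb => /andP [H1 _] H2. exact: hi_pred.
- rewrite filter_flatten -map_comp. congr flatten. apply/eq_in_map => col.
  rewrite mem_rev mem_iota /= => Hc. exact: lo_col.
Qed.

Lemma uniq_P : uniq P.
Proof. apply: filter_uniq. exact: cells_uniq. Qed.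

Lemma sign_W n : n <= D ->
  map (fun c => entry (Wst n) c == t) (sgd t (Wst n)) = pat (D - n) (n + (C0 - C1)) C1.
Proof.
move=> Hn. have [_ HW] := W_props Hn. rewrite sgd_W // map_cat.
rewrite /pat nseqD -catA catA. congr (_ ++ _).
- rewrite -{1}(cat_take_drop (D - n) P) map_cat. have Hu := uniq_P.
  rewrite -(cat_take_drop (D - n) P) cat_uniq in Hu. case/and3P: Hu => _ Hdis _.
  congr (_ ++ _).
  + rewrite (@map_const_in _ _ _ false).
      rewrite size_take. case: ifP => // H; rewrite -/D in H *; congr nseq; lia.
    case=> k col Hin. have HP : (k, col) \in P := mem_take Hin.
    have [/= Hk Hc] := P_valid HP.
    move: HP; rewrite mem_filter /pP /= => /andP [/andP [Hkt /eqP Hx] _].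
    rewrite entryE HW //.
    have -> : ((k, col) \in drop (D - n) P) = false.
      apply/negbTE/negP => Hd. move/hasP: Hdis; apply. by exists (k, col).
    rewrite /fval Hx ltnn eqxx. lia.
  + rewrite (@map_const_in _ _ _ true).
      rewrite size_drop. congr nseq. rewrite -/D. lia.
    case=> k col Hin. have HP : (k, col) \in P := mem_drop Hin.
    have [/= Hk Hc] := P_valid HP.
    by rewrite entryE HW // Hin eqxx.
- rewrite map_flatten -map_comp.
  transitivity (flatten [seq true :: (if col < C1 then [:: false] else [::]) | col <- rev (iota 0 C0)]);
    last exact: lo_pat C1_le_C0.
  congr flatten. apply/eq_in_map => col; rewrite mem_rev mem_iota /= => Hc.
  have [_ HW'] := W_props Hn.
  have Ht1 : t.-1 < r by lia.
  have Hc1 : col < size (nth [::] b t.-1) by apply: leq_trans Hc C0_size.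
  rewrite /= entryE HW' //.
  have -> : ((t.-1, col) \in drop (D - n) P) = false.
    apply/negbTE/negP => /mem_drop. by rewrite mem_filter lo_notP.
  have Hx := K1 Hc1. rewrite Hc in Hx.
  rewrite /fval Hx prednK // eqxx /=. case: ifP => // HC1.
  have Htr : t < r by apply: C1_tr; lia.
  have Hc2 : col < size (nth [::] b t) by apply: leq_trans HC1 C1_size.
  have Hy := K2 Htr Hc2. rewrite HC1 in Hy.
  rewrite /= entryE HW' //.
  have -> : ((t, col) \in drop (D - n) P) = false.
    apply/negbTE/negP => /mem_drop. by rewrite mem_filter lo_notP.
  rewrite /fval. congr [:: _; _]. case: ifP => H1; [|case: ifP => H2]; lia.
Qed.

Lemma e_W n : n <= D -> e_op t (Wst n) = if n < D then Some (Wst n.+1) else None.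
Proof.
move=> Hn. rewrite (e_op_pat (sign_W Hn)).
case E : (D - n) => [|x].
- have -> : (n < D) = false by lia. done.
- have -> : (n < D) = true by lia.
  rewrite sgd_W // nth_cat ifT; last by rewrite -/D; lia.
  rewrite /=. by have -> : D - n.+1 = x by lia.
Qed.

Lemma e_pow_W n : n <= D -> e_pow t n (V b j t) = Some (Wst n).
Proof.
elim: n => [|n IH] Hn //. rewrite /e_pow iterS -/(e_pow t n _) IH; last lia.
by rewrite /= e_W ?ifT //; lia.
Qed.

Lemma e_pow_none : e_pow t D.+1 (V b j t) = None.
Proof. rewrite /e_pow iterS -/(e_pow t D _) e_pow_W // /= e_W // ltnn. done. Qed.

Lemma W_final : Wst D = V b j t.-1.
Proof.
have [HW1 HW2] := W_props (leqnn D).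
apply: tableau_ext; first by rewrite HW1 shape_V.
move=> k c. rewrite -(size_map size) HW1 size_map (size_nth_eq _ HW1) Hsb => Hk Hc.
rewrite HW2 // subnn drop0.
have Hk' : k < size b by rewrite Hsb.
rewrite (ent_V _ _ Hk' Hc).
have Hcell : (k, c) \in cells b by rewrite cells_mem.
rewrite mem_filter Hcell andbT /pP /=.
rewrite /fval; do !(case: ifP => ?); lia.
Qed.

Lemma step_main : exists D, e_pow t D (V b j t) = Some (V b j t.-1) /\ e_pow t D.+1 (V b j t) = None.
Proof. exists D. by rewrite e_pow_W // W_final e_pow_none. Qed.

End Step.

Definition tri (j : nat) : nat := j * j.-1 %/ 2.

Lemma triS j : tri j.+1 = tri j + j.
Proof.
rewrite /tri /=. case: j => [|j] //=.
have -> : j.+2 * j.+1 = j.+1 * 2 + j.+1 * j by nia.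
rewrite divnMDl //. lia.
Qed.

Lemma tri_mono a c : a <= c -> tri a <= tri c.
Proof.
move=> H. rewrite -(subnKC H). elim: (c - a) => [|d IH]; first by rewrite addn0.
rewrite addnS triS. lia.
Qed.

Lemma tri0 : tri 0 = 0. Proof. by []. Qed.
Lemma tri1 : tri 1 = 0. Proof. by []. Qed.

Lemma lw_succ r : long_word r.+1 = long_word r ++ rev (iota 1 r.+1).
Proof.
have E : iota 1 r.+1 = iota 1 r ++ iota (1 + r) 1 by rewrite -iotaD addn1.
rewrite /long_word {1}E map_cat flatten_cat. congr (_ ++ _). rewrite add1n. by rewrite /= cats0.
Qed.

Lemma size_lw r : size (long_word r) = tri r.+1.
Proof.
elim: r => [|r IH] //. by rewrite lw_succ size_cat IH size_rev size_iota [tri r.+2]triS.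
Qed.

Lemma Nlen_tri r : Nlen r = tri r.+1.
Proof. by rewrite /Nlen /tri /= mulnC. Qed.

Lemma nth_lw j r k : j <= r -> k < size (long_word j) ->
  nth 0 (long_word r) k = nth 0 (long_word j) k.
Proof.
move=> H. rewrite -(subnKC H). elim: (r - j) => [|d IH] Hk; first by rewrite addn0.
rewrite addnS lw_succ nth_cat ifT ?IH //. rewrite size_lw. rewrite size_lw in Hk.
apply: leq_trans Hk _. apply: tri_mono. lia.
Qed.

Lemma letter r j t : 1 <= t -> t <= j -> j <= r ->
  nth 0 (long_word r) (tri j + (j - t)) = t.
Proof.
move=> Ht Htj Hjr.
have Hj : 0 < j by lia.
rewrite (@nth_lw j) //; last by rewrite size_lw triS; lia.
rewrite -(prednK Hj) lw_succ nth_cat size_lw prednK // ltnNge leq_addr /= addKn.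
rewrite nth_rev size_iota; last lia.
rewrite nth_iota; lia.
Qed.

Lemma take_apply_e (ws as_ : seq nat) k T : k < size ws -> k < size as_ ->
  apply_e (take k.+1 ws) (take k.+1 as_) T =
  obind (e_pow (nth 0 ws k) (nth 0 as_ k)) (apply_e (take k ws) (take k as_) T).
Proof.
elim: ws as_ k T => [|i ws IH] [|a as_] [|k] T //= Hk Ha.
- rewrite take0 /=. by case: (e_pow i a T).
- case: (e_pow i a T) => [T'|] //=. exact: IH.
Qed.

Lemma e_pow_none_mono i n n' T : e_pow i n T = None -> n <= n' -> e_pow i n' T = None.
Proof.
move=> H Hn. rewrite -(subnKC Hn). elim: (n' - n) => [|d IH]; first by rewrite addn0.
by rewrite addnS /e_pow iterS -/(e_pow i (n + d) T) IH.
Qed.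

Section Final.
Variables (r : nat) (m : seq nat) (b : tableau) (a : seq nat).
Hypothesis Hr : 1 <= r.
Hypothesis Hb : is_SSYT r (ell m) b.
Hypothesis Hm : size m = r.
Hypothesis Ha : is_BZL_path r b a.

Let Hsb : size b = r := L_size Hb.

Lemma row_ge k x : k < r -> x \in nth [::] b k -> k.+1 <= x <= r.+1.
Proof.
move=> Hk /(nthP 0) [c Hc <-].
have H1 := L_ge Hr Hb Hm Hk Hc. have /andP [_ H2] := L_range Hb Hk Hc.
by apply/andP; split.
Qed.

Lemma V11 : V b 1 1 = b.
Proof.
rewrite /V. rewrite -{3}(mkseq_nth [::] b) /mkseq. apply/eq_in_map => k.
rewrite mem_iota Hsb /= => Hk. rewrite -{2}(map_id (nth [::] b k)). apply/eq_in_map => x Hx.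
have := row_ge Hk Hx. rewrite /fval. do !(case: ifP => ?); lia.
Qed.

Lemma Vtrans j : V b j 0 = V b j.+1 j.+1.
Proof.
rewrite /V. apply/eq_in_map => k. rewrite mem_iota Hsb /= => Hk.
apply/eq_in_map => x Hx.
have := row_ge Hk Hx. rewrite /fval. do !(case: ifP => ?); lia.
Qed.

Lemma advance n T s T' D : apply_e (take n (long_word r)) (take n a) b = Some T ->
  n < Nlen r -> nth 0 (long_word r) n = s ->
  e_pow s D T = Some T' -> e_pow s D.+1 T = None ->
  apply_e (take n.+1 (long_word r)) (take n.+1 a) b = Some T'.
Proof.
move=> Hpre Hn Hs HD HD1. case: Ha => Hsa HBZL.
have [H1 H2] := HBZL n Hn. rewrite /= Hpre Hs /= in H1 H2.
have Hle : D <= nth 0 a n by apply: H2; rewrite HD.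
have Hge : nth 0 a n <= D.
  case: (leqP (nth 0 a n) D) => // Hlt. exfalso; apply: H1. exact: e_pow_none_mono HD1 Hlt.
have HaD : nth 0 a n = D by lia.
rewrite take_apply_e; first by rewrite Hpre Hs HaD /= HD.
- by rewrite size_lw -Nlen_tri.
- by rewrite Hsa.
Qed.

Lemma bzl_invariant n : forall j t, 1 <= t -> t <= j -> j <= r -> tri j + (j - t) = n ->
  apply_e (take n (long_word r)) (take n a) b = Some (V b j t).
Proof.
elim: n => [|n IH] j t Ht Htj Hjr Hn.
- have Hj1 : j = 1.
    case: j Hn Htj Hjr => [|[|j]] Hn Htj Hjr //; first lia.
    move: Hn; rewrite triS triS. lia.
  subst j. have -> : t = 1 by lia. by rewrite take0 V11.
- case: (ltnP t j) => Htj'.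
  + have Hpre := IH j t.+1 ltac:(lia) Htj' Hjr ltac:(lia).
    have [D [HD HD1]] := step_main Hr Hb Hm (j := j) (t := t.+1) ltac:(lia) Htj' Hjr.
    apply: advance Hpre _ _ HD HD1.
    * rewrite Nlen_tri. have := tri_mono (_ : j.+1 <= r.+1); rewrite triS.
      move=> /(_ ltac:(lia)). lia.
    * have := letter (r := r) (t := t.+1) (j := j) ltac:(lia) Htj' Hjr. by have -> : tri j + (j - t.+1) = n by lia.
  + have Htj2 : t = j by lia. subst t.
    have Hj2 : 2 <= j.
      case: j Hn Ht Htj Htj' Hjr => [|[|j]] //; rewrite ?tri0 ?tri1; lia.
    have Hpre := IH j.-1 1 (leqnn 1) ltac:(lia) ltac:(lia).
    have Hpre' : apply_e (take n (long_word r)) (take n a) b = Some (V b j.-1 1).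
      apply: Hpre. move: Hn. rewrite -{1}(prednK (ltnW Hj2)) triS subnn. lia.
    have [D [HD HD1]] := step_main Hr Hb Hm (j := j.-1) (t := 1) (leqnn 1) ltac:(lia) ltac:(lia).
    rewrite /= Vtrans prednK in HD; last lia.
    apply: advance Hpre' _ _ HD HD1.
    * rewrite Nlen_tri. have := tri_mono (_ : j.+1 <= r.+1); rewrite triS.
      move=> /(_ ltac:(lia)). move: Hn; rewrite subnn. lia.
    * have := letter (r := r) (t := 1) (j := j.-1) (leqnn 1) ltac:(lia) ltac:(lia).
      have -> : tri j.-1 + (j.-1 - 1) = n; last by [].
      move: Hn. rewrite -{1}(prednK (ltnW Hj2)) triS subnn. lia.
Qed.

End Final.

Lemma size_split (s : seq nat) j :
  size s = count (fun x => x <= j) s + count (fun x => j.+1 <= x) s.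
Proof.
rewrite -(count_predC (fun x => x <= j) s). congr (_ + _).
apply: eq_count => x /=. by rewrite ltnNge.
Qed.

Theorem mainTheorem3 (r : nat) (m : seq nat) (b : tableau) (a : seq nat)
    (k i j : nat) :
  1 <= r -> size m = r ->
  is_SSYT r (ell m) b ->
  is_BZL_path r b a ->
  1 <= k <= Nlen r ->
  1 <= i -> i <= j -> j <= r ->
  k = j * j.-1 %/ 2 + (j - i + 1) ->
  exists b' : tableau,
    apply_e (take k.-1 (long_word r)) (take k.-1 a) b = Some b' /\
    ell m i - bb r b i j = count (pred1 i) (row b' i) /\
    ell m i.+1 - bb r b i.+1 j.+1 = count (pred1 i.+1) (row b' i.+1).
Proof.
move=> Hr Hm Hb Ha Hk Hi Hij Hjr Ek.
have Hsb := L_size Hb.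
have Ek' : k.-1 = tri j + (j - i) by rewrite Ek /tri; lia.
exists (V b j i). split.
  rewrite Ek'. exact: (bzl_invariant Hr Hb Hm Ha Hi Hij Hjr erefl).
split.
- rewrite /row nth_V; last lia.
  rewrite count_map prednK //.
  rewrite (@eq_in_count _ _ (fun x => x <= j)); last first.
    move=> x Hx. have := row_ge Hr Hb Hm (k := i.-1) ltac:(lia) Hx.
    rewrite prednK // /preim /= /fval. do !(case: ifP => ?); lia.
  rewrite /bb ifF; last lia.
  have Hsz : size (nth [::] b i.-1) = ell m i.-1.+1 by apply: (L_rowsz Hb); lia.
  rewrite prednK // in Hsz. by rewrite /row -Hsz (size_split _ j) addnK.
- case: (ltnP i r) => Hir.
  + rewrite /row [i.+1.-1]/= nth_V; last lia.
    rewrite count_map.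
    rewrite (@eq_in_count _ _ (fun x => x <= j.+1)); last first.
      move=> x Hx. have := row_ge Hr Hb Hm (k := i) Hir Hx.
      rewrite /preim /= /fval. do !(case: ifP => ?); lia.
    rewrite -(L_rowsz Hb Hir) (size_split _ j.+1) /bb.
    case: ifP => Hc.
    * have Hjr' : j = r by lia. subst j.
      have -> : count (fun x => r.+2 <= x) (nth [::] b i) = 0.
        apply/eqP; rewrite -leqn0 leqNgt -has_count; apply/hasP => [[x Hx /=]].
        have := row_ge Hr Hb Hm Hir Hx. lia.
      by rewrite addn0 subn0.
    * by rewrite /row /= addnK.
  + have Eir : i = r by lia. subst i.
    rewrite /row [r.+1.-1]/= nth_default; last by rewrite size_V Hsb.
    rewrite /bb eqxx /= /ell Hm big_geq //.
Qed.
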